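(* Let $d\geq 2$. Every antipodal configuration $\omega_{2d}=\{\mathbf x_1,\ldots,\mathbf x_{2d}\}$ of $2d$ points on $S^{d-1}\subset\mathbb R^d$ is centered, i.e. there exists $\mathbf y\in S^{d-1}$ with $-\frac{1}{\sqrt d}\leq \mathbf y\cdot\mathbf x_i\leq\frac1{\sqrt d}$ for all $i=1,\ldots,2d$.
   Context: $S^{d-1}$ is the unit sphere in $\mathbb R^d$. A configuration is a list of points (points may coincide). A configuration on $S^{d-1}$ is antipodal if together with a point $\mathbf x$ it contains $-\mathbf x$. *)

(* Defs.v *)
From mathcomp Require Import all_boot all_order all_algebra.
From mathcomp Require Import reals.
Set Implicit Arguments. Unset Strict Implicit. Unset Printing Implicit Defensive.
Import Order.TTheory GRing.Theory Num.Theory.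
Local Open Scope ring_scope.

Definition dotv (R : realType) (d : nat) (u v : 'rV[R]_d) : R :=
  \sum_(i < d) u 0 i * v 0 i.

Definition on_sphere (R : realType) (d : nat) (x : 'rV[R]_d) : Prop :=
  dotv x x = 1.

(* a configuration of n points on the sphere (points may coincide) *)
Definition sphere_config (R : realType) (d n : nat) (X : 'I_n -> 'rV[R]_d) : Prop :=
  forall i, on_sphere (X i).

Definition antipodal (R : realType) (d n : nat) (X : 'I_n -> 'rV[R]_d) : Prop :=
  forall i, exists j, X j = - X i.

Definition centered (R : realType) (d n : nat) (X : 'I_n -> 'rV[R]_d) : Prop :=
  exists y : 'rV[R]_d, on_sphere y /\
    forall i, - (Num.sqrt (d%:R))^-1 <= dotv y (X i) <= (Num.sqrt (d%:R))^-1.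

(* Main.v *)
Require Import Defs.
From mathcomp Require Import all_boot all_order all_algebra.
From mathcomp Require Import reals.
From mathcomp Require Import zify ring lra.
Import Order.TTheory GRing.Theory Num.Theory.
Local Open Scope ring_scope.

Section Dot.
Variable (R : realType) (d : nat).
Implicit Types u v w : 'rV[R]_d.

Lemma dotvC u v : dotv u v = dotv v u.
Proof. by apply: eq_bigr => i _; rewrite mulrC. Qed.

Lemma dotvDl u v w : dotv (u + v) w = dotv u w + dotv v w.
Proof. by rewrite /dotv -big_split; apply: eq_bigr => i _; rewrite mxE mulrDl. Qed.

Lemma dotvZl a u v : dotv (a *: u) v = a * dotv u v.
Proof. by rewrite /dotv mulr_sumr; apply: eq_bigr => i _; rewrite mxE mulrA. Qed.

Lemma dotvNl u v : dotv (- u) v = - dotv u v.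
Proof. by rewrite -scaleN1r dotvZl mulN1r. Qed.

Lemma dotvNr u v : dotv u (- v) = - dotv u v.
Proof. by rewrite dotvC dotvNl dotvC. Qed.

Lemma dotvZr a u v : dotv u (a *: v) = a * dotv u v.
Proof. by rewrite dotvC dotvZl dotvC. Qed.

Lemma dotvDr u v w : dotv u (v + w) = dotv u v + dotv u w.
Proof. by rewrite dotvC dotvDl dotvC (dotvC w). Qed.

Lemma dotv0l v : dotv 0 v = 0.
Proof. by rewrite /dotv big1 // => i _; rewrite mxE mul0r. Qed.

Lemma dotv_ge0 u : 0 <= dotv u u.
Proof. by apply: sumr_ge0 => i _; rewrite -expr2 sqr_ge0. Qed.

Lemma dotv_eq0 u : dotv u u = 0 -> u = 0.
Proof.
move=> h.
have H : \sum_(i < d) u 0 i ^+ 2 = 0.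
  by rewrite -[RHS]h /dotv; apply: eq_bigr => j _; rewrite expr2.
have H2 := psumr_eq0P (fun i (_ : true) => sqr_ge0 (u 0 i)) H.
apply/rowP => i; rewrite mxE; apply/eqP; rewrite -sqrf_eq0; apply/eqP.
exact: H2.
Qed.

Lemma normalize w : w != 0 ->
  dotv ((Num.sqrt (dotv w w))^-1 *: w) ((Num.sqrt (dotv w w))^-1 *: w) = 1.
Proof.
move=> hw; have hp : 0 < dotv w w.
  rewrite lt_def dotv_ge0 andbT; apply/eqP => /dotv_eq0 h; by rewrite h eqxx in hw.
rewrite dotvZl dotvZr mulrA -expr2 exprVn sqr_sqrtr ?dotv_ge0 // mulVf //.
by rewrite gt_eqF.
Qed.

Lemma greedy (c : nat -> 'rV[R]_d) n : exists s : nat -> R,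
  (forall j, s j = 1 \/ s j = -1) /\
  \sum_(j < n) dotv (c j) (c j) <=
     dotv (\sum_(j < n) s j *: c j) (\sum_(j < n) s j *: c j).
Proof.
elim: n => [|n [s [Hs Hle]]].
  exists (fun _ => 1); split; first by left.
  by rewrite big_ord0 dotv_ge0.
set W := \sum_(j < n) s j *: c j in Hle.
pose sg : R := if 0 <= dotv W (c n) then 1 else -1.
exists (fun j => if j == n then sg else s j); split.
  move=> j; case: eqP => _; last exact: Hs.
  by rewrite /sg; case: ifP => _; [left|right].
rewrite !big_ord_recr /= eqxx.
have -> : \sum_(i < n) (if (i:nat) == n then sg else s i) *: c i = W.
  by apply: eq_bigr => i _; rewrite ltn_eqF.
rewrite dotvDl !dotvDr !dotvZl !dotvZr.
have hsg : sg * sg = 1 by rewrite /sg; case: ifP => _; rewrite ?mulr1 ?mulrNN ?mulr1.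
have hpos : 0 <= sg * dotv W (c n).
  rewrite /sg; case: ifP => h; rewrite ?mul1r ?mulN1r ?oppr_ge0 //.
  by apply: ltW; rewrite ltNge h.
rewrite (dotvC (c n) W) mulrA hsg mul1r.
lra.
Qed.

Lemma core (u : 'I_d -> 'rV[R]_d) : (0 < d)%N ->
  (forall k, dotv (u k) (u k) <= 1) ->
  exists y, dotv y y = 1 /\ forall k, `|dotv y (u k)| <= (Num.sqrt d%:R)^-1.
Proof.
move=> d0 hu.
pose U := \matrix_(k < d, i < d) u k 0 i.
case: (boolP (U \in unitmx)) => hU; last first.
  have : \det U^T == 0 by rewrite det_tr; move: hU; rewrite unitmxE unitfE negbK.
  case/det0P => v v0 hv.
  exists ((Num.sqrt (dotv v v))^-1 *: v); split; first exact: normalize.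
  move=> k; rewrite dotvZl.
  have -> : dotv v (u k) = 0.
    move: (congr1 (fun M : 'rV[R]_d => M 0 k) hv); rewrite !mxE => <-.
    by apply: eq_bigr => i _; rewrite !mxE.
  by rewrite mulr0 normr0 invr_ge0 sqrtr_ge0.
pose V := invmx U.
have hUV : U *m V = 1%:M := mulmxV hU.
pose c := fun j : nat => \row_(i < d) V i (insubd i j).
have ins : forall i j : 'I_d, insubd i (j : nat) = j.
  by move=> i j; apply: val_inj; rewrite val_insubd ltn_ord.
have [s [hs hle]] := greedy c d.
set w := \sum_(j < d) s j *: c j in hle.
have hw_entry : forall i, w 0 i = \sum_(j < d) s j * V i j.
  move=> i; rewrite /w summxE; apply: eq_bigr => j _; by rewrite !mxE ins.
have hdot : forall k : 'I_d, dotv w (u k) = s k.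
  move=> k; rewrite dotvC /dotv.
  under eq_bigr do rewrite hw_entry mulr_sumr.
  rewrite exchange_big /=.
  transitivity (\sum_(j < d) s j * (U *m V) k j).
    apply: eq_bigr => j _; rewrite mxE mulr_sumr; apply: eq_bigr => i _.
    by rewrite mxE mulrCA.
  rewrite hUV (bigD1 k) //= mxE eqxx mulr1 big1 ?addr0 // => j /negbTE hjk.
  by rewrite mxE eq_sym hjk mulr0.
pose A := \sum_(k < d) \sum_(i < d) U k i ^+ 2.
pose B := \sum_(k < d) \sum_(i < d) U k i * V i k.
pose C := \sum_(k < d) \sum_(i < d) V i k ^+ 2.
have e : \sum_(k < d) \sum_(i < d) (U k i - V i k) ^+ 2 = A + C - 2 * B.
  rewrite /A /B /C mulr_sumr -big_split -sumrB /=; apply: eq_bigr => k _.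
  rewrite mulr_sumr -big_split -sumrB; apply: eq_bigr => i _ /=; ring.
have h0 : 0 <= \sum_(k < d) \sum_(i < d) (U k i - V i k) ^+ 2.
  by apply: sumr_ge0 => k _; apply: sumr_ge0 => i _; rewrite sqr_ge0.
have hA : A <= d%:R.
  have -> : (d%:R : R) = \sum_(k < d) 1 by rewrite sumr_const card_ord.
  apply: ler_sum => k _; apply: le_trans (hu k); rewrite le_eqVlt; apply/orP; left.
  by apply/eqP; apply: eq_bigr => i _; rewrite mxE expr2.
have hB : B = d%:R.
  have -> : (d%:R : R) = \sum_(k < d) 1 by rewrite sumr_const card_ord.
  rewrite /B; apply: eq_bigr => k _.
  by have := congr1 (fun M : 'M[R]_d => M k k) hUV; rewrite !mxE eqxx /=.
have hC : C = \sum_(j < d) dotv (c j) (c j).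
  apply: eq_bigr => k _; apply: eq_bigr => i _; by rewrite !mxE ins expr2.
have hN : d%:R <= dotv w w.
  apply: le_trans hle; rewrite -hC; move: h0; rewrite e hB; lra.
have dpos : (0 : R) < d%:R by rewrite ltr0n.
have w0 : w != 0.
  apply/eqP => w0; move: hN; rewrite w0 dotv0l => h.
  by have := lt_le_trans dpos h; rewrite ltxx.
exists ((Num.sqrt (dotv w w))^-1 *: w); split; first exact: normalize.
move=> k; rewrite dotvZl hdot normrM.
have -> : `|s k| = 1 by case: (hs k) => ->; rewrite ?normrN normr1.
rewrite mulr1 ger0_norm ?invr_ge0 ?sqrtr_ge0 //.
rewrite lef_pV2 ?posrE ?sqrtr_gt0 //; last by apply: lt_le_trans hN.
by rewrite ler_sqrt //; apply: le_trans hN; apply: ltW.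
Qed.

End Dot.

Lemma reduce (R : realType) (d n : nat) (X : 'I_n -> 'rV[R]_d) (i0 : 'I_n) :
  (n <= 2 * d)%N -> sphere_config X -> antipodal X ->
  exists u : 'I_d -> 'rV[R]_d, (forall k, dotv (u k) (u k) <= 1) /\
    forall i, exists k, X i = u k \/ X i = - u k.
Proof.
move=> hn hX hA.
pose cls i j := (X j == X i) || (X j == - X i).
have cls_refl i : cls i i by rewrite /cls eqxx.
have cls_sym i j : cls i j -> cls j i.
  by rewrite /cls => /orP[/eqP->|/eqP->]; rewrite ?eqxx ?opprK ?eqxx ?orbT.
have cls_tr i j k : cls i j -> cls j k -> cls i k.
  by rewrite /cls => /orP[/eqP hj|/eqP hj] /orP[/eqP hk|/eqP hk];
     rewrite hk hj ?opprK eqxx ?orbT.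
pose r i := odflt i [pick j | cls i j].
have r_cls i : cls i (r i).
  by rewrite /r; case: pickP => [j hj | _] /=; [exact: hj | exact: cls_refl].
have r_eq i j : cls i j -> r i = r j.
  move=> hij; rewrite /r (@eq_pick _ (fun k => cls i k) (fun k => cls j k)).
    case: pickP => [k _ //| H]; by have := H j; rewrite /= cls_refl.
  move=> k /=; apply/idP/idP => h.
    exact: cls_tr (cls_sym _ _ hij) h.
  exact: cls_tr hij h.
pose A := r @: [set: 'I_n].
have rA a : a \in A -> r a = a.
  by case/imsetP => i _ ->; rewrite -(r_eq _ _ (r_cls i)).
have Xne a : X a != - X a.
  apply/eqP => h; have h1 := hX a; have h2 := hX a; rewrite /on_sphere in h1 h2.
  rewrite {2}h dotvNr h1 in h2; move: h2; clear; lra.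
pose neg a := odflt a [pick j | X j == - X a].
have negP a : X (neg a) = - X a.
  rewrite /neg; case: pickP => [j /eqP //|H]; have [j hj] := hA a.
  by have := H j; rewrite hj eqxx.
have card : (#|A| <= d)%N.
  have inj : {in A &, injective neg}.
    move=> a b ha hb h; rewrite -(rA a ha) -(rA b hb); apply: r_eq.
    have hab : X a = X b by apply: oppr_inj; rewrite -!negP h.
    by rewrite /cls hab eqxx.
  have disj : A :&: neg @: A = set0.
    apply/setP => b; rewrite inE in_set0; apply/negbTE/andP => -[hb /imsetP[a ha hba]].
    have hcl : cls a b by rewrite /cls hba negP eqxx orbT.
    have := r_eq _ _ hcl; rewrite (rA _ ha) (rA _ hb) => hab.
    have := negP a; rewrite -hba -hab => h.
    by move/eqP: h; rewrite (negbTE (Xne a)).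
  have := subset_leq_card (subsetT (A :|: neg @: A)).
  rewrite cardsT card_ord cardsU disj cards0 card_in_imset //.
  lia.
pose u k := if (k < #|A|)%N then X (nth i0 (enum A) k) else 0.
exists u; split.
  move=> k; rewrite /u; case: ifP => _.
    by move: (hX (nth i0 (enum A) k)); rewrite /on_sphere => ->.
  by rewrite dotv0l ler01.
move=> i.
have hai : r i \in A by apply: imset_f; rewrite in_setT.
have hk : (index (r i) (enum A) < d)%N.
  by apply: leq_trans card; rewrite cardE index_mem mem_enum.
exists (Ordinal hk); rewrite /u /= cardE index_mem mem_enum hai nth_index ?mem_enum //.
by case/orP: (r_cls i) => /eqP h; [left | right]; rewrite h ?opprK.
Qed.

Theorem corollary3p2 (R : realType) (d : nat) (hd : (2 <= d)%N)
  (X : 'I_(2 * d) -> 'rV[R]_d) :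
  sphere_config X -> antipodal X -> centered X.
Proof.
move=> hX hA.
have d0 : (0 < d)%N by apply: leq_trans hd.
have n0 : (0 < 2 * d)%N by rewrite muln_gt0 d0.
have [u [hu hXu]] := @reduce R d (2 * d) X (Ordinal n0) (leqnn _) hX hA.
have [y [hy hb]] := @core R d u d0 hu.
exists y; split => // i; have [k hk] := hXu i.
rewrite -ler_norml; case: hk => ->; rewrite ?dotvNr ?normrN; exact: hb.
Qed.
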